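(* Fix an integer $\delta>0$. There is $n(\delta)$ such that for all $n\ge n(\delta)$, among all $n$-vertex graphs with minimum degree at least $\delta$, the unique graph with the most independent sets is $K_{\delta,n-\delta}$.
   Context: Graphs are simple, loopless and finite; the number of independent sets includes the empty set. $K_{a,b}$ is the complete bipartite graph with $a$ vertices in one part and $b$ in the other. *)

(* Defs.v *)
From mathcomp Require Import all_boot.
Set Implicit Arguments. Unset Strict Implicit. Unset Printing Implicit Defensive.

Definition simple_graph (T : finType) (e : rel T) : Prop :=
  (forall x y, e x y = e y x) /\ (forall x, ~~ e x x).

Definition degree (T : finType) (e : rel T) (x : T) : nat := #|[set y | e x y]|.

Definition min_degree_ge (T : finType) (e : rel T) (d : nat) : Prop :=
  forall x, d <= degree e x.

Definition independent (T : finType) (e : rel T) (S : {set T}) : bool :=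
  [forall x in S, forall y in S, ~~ e x y].

Definition num_indep (T : finType) (e : rel T) : nat :=
  #|[set S : {set T} | independent e S]|.

(* K_{d, n-d} on vertex set 'I_n : parts {i < d} and {i >= d}. *)
Definition Kbip (n d : nat) : rel 'I_n :=
  fun x y => (x < d) != (y < d).
Arguments Kbip : clear implicits.

Definition graph_iso (T : finType) (e1 e2 : rel T) : Prop :=
  exists f : T -> T, bijective f /\ forall x y, e1 x y = e2 (f x) (f y).

(* Main.v *)
Require Import Defs.
From mathcomp Require Import all_boot zify.
Set Implicit Arguments. Unset Strict Implicit. Unset Printing Implicit Defensive.

Definition iU (T : finType) (e : rel T) (U : {set T}) : nat :=
  #|[set S : {set T} | (S \subset U) && independent e S]|.

Lemma card_bigcup_le (I T : finType) (A : {pred I}) (F : I -> {set T}) :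
  #|\bigcup_(i in A) F i| <= \sum_(i in A) #|F i|.
Proof.
apply: (big_ind2 (fun (X : {set T}) (k : nat) => #|X| <= k)).
- by rewrite cards0.
- move=> X1 k1 X2 k2 h1 h2; apply: leq_trans (leq_card_setU X1 X2) _.
  exact: leq_add.
- by [].
Qed.

Lemma indepP (T : finType) (e : rel T) (S : {set T}) :
  reflect (forall x y, x \in S -> y \in S -> ~~ e x y) (independent e S).
Proof.
apply: (iffP forallP) => [h x y xS yS | h x].
- by move: (h x); rewrite xS /= => /forallP /(_ y); rewrite yS.
- apply/implyP => xS; apply/forallP => y; apply/implyP => yS; exact: h.
Qed.

Lemma indep_sub (T : finType) (e : rel T) (S S' : {set T}) :
  S' \subset S -> independent e S -> independent e S'.
Proof.
move=> sub /indepP h; apply/indepP => x y xS yS.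
by apply: h; apply: (subsetP sub).
Qed.

Lemma num_indep_iU (T : finType) (e : rel T) : num_indep e = iU e setT.
Proof. by rewrite /num_indep /iU; apply: eq_card => S; rewrite !inE subsetT. Qed.

Lemma iU_le_pow (T : finType) (e : rel T) (U : {set T}) : iU e U <= 2 ^ #|U|.
Proof.
rewrite -card_powerset; apply: subset_leq_card; apply/subsetP => S.
by rewrite !inE => /andP[].
Qed.

Lemma iU_indep (T : finType) (e : rel T) (U : {set T}) : independent e U -> iU e U = 2 ^ #|U|.
Proof.
move=> hU; rewrite -card_powerset; apply: eq_card => S; rewrite !inE.
by case sub: (S \subset U) => //=; apply: indep_sub hU.
Qed.

Lemma iU_mono (T : finType) (e : rel T) (U U' : {set T}) : U \subset U' -> iU e U <= iU e U'.
Proof.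
move=> sub; apply: subset_leq_card; apply/subsetP => S; rewrite !inE.
by case/andP => h ->; rewrite (subset_trans h sub).
Qed.

(* independent sets containing w avoid its neighbourhood *)
Lemma card_contain (T : finType) (e : rel T) (w : T) :
  #|[set S : {set T} | independent e S && (w \in S)]| <= 2 ^ #|~: [set y | e w y]|.
Proof.
rewrite -card_powerset; apply: subset_leq_card; apply/subsetP => S.
rewrite !inE => /andP[/indepP h wS]; apply/subsetP => y yS.
by rewrite !inE; apply: h.
Qed.

Lemma iU_edge (T : finType) (e : rel T) (U : {set T}) x y :
  x \in U -> y \in U -> e x y -> iU e U <= 3 * iU e (U :\ x :\ y).
Proof.
move=> xU yU exy.
set A0 := [set S : {set T} | (S \subset U :\ x :\ y) && independent e S].
have sub : [set S : {set T} | (S \subset U) && independent e S] \subset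
   A0 :|: [set x |: S | S in A0] :|: [set y |: S | S in A0].
  apply/subsetP => S; rewrite inE => /andP[SU hS].
  have nxy : ~~ ((x \in S) && (y \in S)).
    apply/andP => -[xS yS]; by move/indepP: hS => /(_ x y xS yS); rewrite exy.
  have key : forall z, z \in S -> S :\ z \in A0 -> S \in [set z |: S | S in A0].
    by move=> z zS h; apply/imsetP; exists (S :\ z) => //; rewrite setD1K.
  case xS: (x \in S).
    have yS : y \notin S by move: nxy; rewrite xS.
    rewrite !inE (key x) //; first by rewrite orbT.
    rewrite inE (indep_sub (subD1set S x) hS) andbT; apply/subsetP => z.
    rewrite !inE => /andP[zx zS]; rewrite zx (subsetP SU) // !andbT.
    by apply/eqP => zy; move: yS; rewrite -zy zS.
  case yS: (y \in S).
    rewrite !inE (key y) //; first by rewrite orbT.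
    rewrite inE (indep_sub (subD1set S y) hS) andbT; apply/subsetP => z.
    rewrite !inE => /andP[zy zS]; rewrite zy (subsetP SU) // !andbT.
    by apply/eqP => zx; move: xS; rewrite -zx zS.
  rewrite !inE hS andbT; apply/orP; left; apply/orP; left; apply/subsetP => z zS.
  rewrite !inE (subsetP SU) // andbT.
  by apply/andP; split; apply: contraTneq zS => ->; rewrite ?xS ?yS.
rewrite /iU -/A0; apply: leq_trans (subset_leq_card sub) _.
apply: leq_trans (_ : _ <= #|A0| + #|A0| + #|A0|) _; last by lia.
apply: leq_trans (leq_card_setU _ _) _.
apply: leq_add; last exact: leq_imset_card.
apply: leq_trans (leq_card_setU _ _) _.
by apply: leq_add; last exact: leq_imset_card.
Qed.

Lemma not_indep_edge (T : finType) (e : rel T) (U : {set T}) :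
  ~~ independent e U -> exists x y, [/\ x \in U, y \in U & e x y].
Proof.
move/forallPn => [x]; rewrite negb_imply => /andP[xU /forallPn [y]].
rewrite negb_imply negbK => /andP[yU exy]; by exists x, y.
Qed.

Lemma cover_lemma (T : finType) (e : rel T) (irr : forall x, ~~ e x x) m :
  forall U : {set T}, iU e U * 4 ^ m <= 3 ^ m * 2 ^ #|U| \/
    exists C : {set T}, #|C| < 2 * m /\ independent e (U :\: C).
Proof.
elim: m => [|m IH] U.
  by left; rewrite !expn0 muln1 mul1n iU_le_pow.
case hU: (independent e U).
  right; exists set0; split; first by rewrite cards0.
  by rewrite setD0.
have [x [y [xU yU exy]]] := not_indep_edge (negbT hU).
have xy : x != y by apply/eqP => hxy; move: (irr x); rewrite {2}hxy exy.
have cardU : #|U| = #|U :\ x :\ y| + 2.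
  rewrite (cardsD1 x U) xU (cardsD1 y (U :\ x)) !inE eq_sym xy yU; lia.
have hE := iU_edge xU yU exy.
case: (IH (U :\ x :\ y)) => [h | [C [hC hCi]]].
  left; rewrite cardU expnD !expnS.
  apply: leq_trans (_ : 3 * iU e (U :\ x :\ y) * (4 * 4 ^ m) <= _).
    by rewrite leq_mul2r hE orbT.
  move: h; set a := iU _ _; set b := 4 ^ m; set c := 3 ^ m; set d := 2 ^ _.
  move=> h; have -> : 3 * a * (4 * b) = 12 * (a * b) by lia.
  have -> : 3 * c * (d * (2 * 2)) = 12 * (c * d) by lia.
  by rewrite leq_mul2l h orbT.
right; exists (x |: (y |: C)); split.
  apply: leq_ltn_trans (leq_card_setU _ _) _; rewrite cards1.
  apply: leq_ltn_trans (leq_add (leqnn 1) (leq_card_setU _ _)) _.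
  rewrite cards1; lia.
suff -> : U :\: (x |: (y |: C)) = U :\ x :\ y :\: C by [].
by apply/setP => z; rewrite !inE; case: (z == x); case: (z == y); rewrite ?andbF.
Qed.

Lemma split_bij (T : finType) (A A' : {set T}) : #|A| = #|A'| ->
  exists f : T -> T, bijective f /\ forall x, (f x \in A') = (x \in A).
Proof.
move=> hc.
have Hs : forall B : {set T}, [/\ uniq (enum B ++ enum (~: B)),
    forall x, x \in enum B ++ enum (~: B) & size (enum B ++ enum (~: B)) = #|T|].
  move=> B; split.
  - rewrite cat_uniq !enum_uniq /= andbT; apply/hasPn => x.
    by rewrite !mem_enum inE.
  - by move=> x; rewrite mem_cat !mem_enum inE; case: (x \in B).
  - by rewrite size_cat -!cardE cardsC.
set s := enum A ++ enum (~: A); set s' := enum A' ++ enum (~: A').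
have [us ms ss] := Hs A; have [us' ms' ss'] := Hs A'.
rewrite -/s -/s' in us ms ss us' ms' ss'.
have iS : forall x, index x s < size s' by move=> x; rewrite ss' -ss index_mem.
have iS' : forall x, index x s' < size s by move=> x; rewrite ss -ss' index_mem.
exists (fun x => nth x s' (index x s)); split.
  exists (fun y => nth y s (index y s')).
  - by move=> x /=; rewrite index_uniq // nth_index.
  - by move=> y /=; rewrite index_uniq // nth_index.
move=> x; rewrite /s /s' index_cat nth_cat -!cardE -hc.
case xA: (x \in enum A).
  have lt : index x (enum A) < #|A| by rewrite cardE index_mem.
  rewrite lt; rewrite mem_enum in xA; rewrite xA.
  by rewrite -mem_enum mem_nth // -cardE -hc.
rewrite mem_enum in xA; rewrite xA ltnNge leq_addr /= addKn.
have : nth x (enum (~: A')) (index x (enum (~: A))) \in enum (~: A').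
  apply: mem_nth; rewrite -!cardE.
  have hcc : #|~: A'| = #|~: A| by move: (cardsC A) (cardsC A'); rewrite hc; lia.
  have : x \in enum (~: A) by rewrite mem_enum inE xA.
  by rewrite -index_mem -cardE hcc.
by rewrite mem_enum inE => /negbTE.
Qed.

Definition Mset (T : finType) (e : rel T) (B : {set T}) :=
  [set S : {set T} | [&& S \subset B, independent e S & S != set0]].

Lemma struct_count (T : finType) (e : rel T) (B : {set T}) :
  independent e (~: B) -> (forall v w, v \notin B -> w \in B -> e v w) ->
  num_indep e = 2 ^ #|~: B| + #|Mset e B|.
Proof.
move=> hI hvw; rewrite /num_indep.
have -> : [set S : {set T} | independent e S] = powerset (~: B) :|: Mset e B.
  apply/setP => S; rewrite !inE.
  case: (boolP (S \subset ~: B)) => sub /=.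
    by rewrite (indep_sub sub hI).
  apply/idP/idP.
    move=> hS; rewrite hS /=.
    have [w wS wB] : exists2 w, w \in S & w \in B.
      move/subsetPn: sub => [w wS]; rewrite inE negbK => wB; by exists w.
    apply/andP; split.
      apply/subsetP => v vS; apply/negPn/negP => vB.
      by move/indepP: hS => /(_ v w vS wS); rewrite hvw.
    by apply/set0Pn; exists w.
  by case/and3P.
rewrite cardsU card_powerset.
suff -> : powerset (~: B) :&: Mset e B = set0 by rewrite cards0 subn0.
apply/setP => S; rewrite !inE; apply/negP => /and4P[h1 h2 _ h3].
move/set0Pn: h3 => [x xS].
by move: (subsetP h1 x xS) (subsetP h2 x xS); rewrite inE => /negP.
Qed.

Lemma Mset_le (T : finType) (e : rel T) (B : {set T}) : #|Mset e B| <= 2 ^ #|B| - 1.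
Proof.
rewrite -card_powerset.
have : Mset e B \subset powerset B :\ set0.
  by apply/subsetP => S; rewrite !inE => /and3P[-> _ ->].
move/subset_leq_card; rewrite (cardsD1 set0 (powerset B)) inE sub0set; lia.
Qed.

Lemma Mset_eq (T : finType) (e : rel T) (B : {set T}) :
  independent e B -> #|Mset e B| = 2 ^ #|B| - 1.
Proof.
move=> hB; rewrite -card_powerset.
have -> : Mset e B = powerset B :\ set0.
  apply/setP => S; rewrite !inE; case: (S != set0) => /=; rewrite ?andbF ?andbT //.
  by case sub: (S \subset B) => //=; apply: indep_sub hB.
rewrite (cardsD1 set0 (powerset B)) inE sub0set; lia.
Qed.

Lemma Mset_lt (T : finType) (e : rel T) (B : {set T}) :
  ~~ independent e B -> #|Mset e B| < 2 ^ #|B| - 1.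
Proof.
move=> hB; rewrite -card_powerset.
have : Mset e B \proper powerset B :\ set0.
  rewrite properE; apply/andP; split.
    by apply/subsetP => S; rewrite !inE => /and3P[-> _ ->].
  apply/subsetPn; exists B; last by rewrite !inE (negbTE hB) andbF.
  rewrite !inE subxx andbT; apply/eqP => B0; move: hB; rewrite B0.
  by apply/negP/negPn/indepP => x y; rewrite inE.
move/proper_card; rewrite (cardsD1 set0 (powerset B)) inE sub0set; lia.
Qed.

Definition B0 (n d : nat) : {set 'I_n} := [set i : 'I_n | i < d].

Lemma card_B0 n d : d <= n -> #|B0 n d| = d.
Proof.
move=> h.
have -> : B0 n d = [set widen_ord h i | i in 'I_d].
  apply/setP => y; rewrite inE; apply/idP/imsetP.
    by move=> yd; exists (Ordinal yd) => //; apply: val_inj.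
  by move=> [i _ ->] /=.
by rewrite card_imset ?card_ord // => i j /(congr1 val) /= ?; apply: val_inj.
Qed.

Lemma card_B0C n d : d <= n -> #|~: B0 n d| = n - d.
Proof. by move=> h; move: (cardsC (B0 n d)); rewrite card_B0 // card_ord; lia. Qed.

Lemma Kbip_simple n d : simple_graph (Kbip n d).
Proof. by split => [x y|x]; rewrite /Kbip; [rewrite eq_sym | rewrite eqxx]. Qed.

Lemma Kbip_B0 n d x y : Kbip n d x y = ((x \in B0 n d) != (y \in B0 n d)).
Proof. by rewrite /Kbip !inE. Qed.

Lemma Kbip_mindeg n d : d + d <= n -> min_degree_ge (Kbip n d) d.
Proof.
move=> h x; rewrite /degree.
case xd: (x \in B0 n d).
  have -> : [set y | Kbip n d x y] = ~: B0 n d.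
    by apply/setP => y; rewrite in_setC inE Kbip_B0 xd; case: (y \in B0 n d).
  rewrite card_B0C; lia.
have -> : [set y | Kbip n d x y] = B0 n d.
  by apply/setP => y; rewrite inE Kbip_B0 xd; case: (y \in B0 n d).
rewrite card_B0 //; lia.
Qed.

Lemma Kbip_count n d : d <= n -> num_indep (Kbip n d) = 2 ^ (n - d) + (2 ^ d - 1).
Proof.
move=> h; rewrite (@struct_count _ _ (B0 n d)).
- rewrite card_B0C // Mset_eq ?card_B0 //.
  by apply/indepP => x y; rewrite Kbip_B0 => -> ->.
- by apply/indepP => x y; rewrite Kbip_B0 !inE => /negbTE -> /negbTE ->.
- by move=> v w; rewrite Kbip_B0 => /negbTE -> ->.
Qed.

Lemma iso_Kbip n d (e : rel 'I_n) (B : {set 'I_n}) : d <= n -> #|B| = d ->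
  (forall x y, e x y = ((x \in B) != (y \in B))) -> graph_iso e (Kbip n d).
Proof.
move=> h hB he.
have [f [bf hf]] := @split_bij _ B (B0 n d) (etrans hB (esym (card_B0 h))).
exists f; split => // x y; by rewrite he Kbip_B0 !hf.
Qed.

Lemma decomp (T : finType) (e : rel T) (B : {set T}) :
  num_indep e <= iU e (~: B) + \sum_(w in B) 2 ^ #|~: [set y | e w y]|.
Proof.
rewrite /num_indep.
have sub : [set S : {set T} | independent e S] \subset
  [set S : {set T} | (S \subset ~: B) && independent e S] :|:
  \bigcup_(w in B) [set S : {set T} | independent e S && (w \in S)].
  apply/subsetP => S; rewrite !inE => hS.
  case: (boolP (S \subset ~: B)) => sub /=; first by rewrite hS.
  move/subsetPn: sub => [w wS]; rewrite inE negbK => wB.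
  apply/bigcupP; exists w => //; by rewrite inE hS wS.
apply: leq_trans (subset_leq_card sub) _.
apply: leq_trans (leq_card_setU _ _) _; rewrite leq_add2l.
apply: leq_trans (card_bigcup_le _ _) _.
apply: leq_sum => w _; exact: card_contain.
Qed.

Lemma pow_bound k : 2 ^ k * 27 ^ k <= 64 ^ k.
Proof. elim: k => [//|k IH]; rewrite !expnS; nia. Qed.

Lemma case1 (d n i m : nat) : m = 3 * (d + 1) -> d <= n ->
  i * 4 ^ m <= 3 ^ m * 2 ^ n -> i < 2 ^ (n - d).
Proof.
move=> -> dn h.
have h4 : 2 ^ (d + 1) * 3 ^ (3 * (d + 1)) <= 4 ^ (3 * (d + 1)).
  by rewrite !expnM; apply: pow_bound.
have pos : 0 < 3 ^ (3 * (d + 1)) by rewrite expn_gt0.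
have e2 : 2 ^ n = 2 ^ (n - d) * 2 ^ d by rewrite -expnD subnK.
have hd : 2 ^ (d + 1) = 2 ^ d * 2 by rewrite expnD.
have pd : 0 < 2 ^ d by rewrite expn_gt0.
have pnd : 0 < 2 ^ (n - d) by rewrite expn_gt0.
move: h h4; rewrite e2 hd.
set a := 3 ^ _; set b := 4 ^ _; set c := 2 ^ d; set f := 2 ^ (n - d).
move=> h h4.
have : i * (c * 2) * a <= f * c * a by nia.
rewrite leq_mul2r (gtn_eqF pos) /= => h'.
have : (i * 2) * c <= f * c by rewrite -mulnA (mulnC 2); exact: h'.
rewrite leq_pmul2r //; lia.
Qed.

Definition Nbound (d : nat) : nat :=
  let m := 3 * (d + 1) in let c0 := 2 * m in let K := c0 + d + 1 in
  let R := c0 + c0 * K in R + K + 3 * d + 3.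

Lemma main_struct (T : finType) (e : rel T) (d : nat) :
  0 < d -> simple_graph e -> min_degree_ge e d -> Nbound d <= #|T| ->
  num_indep e < 2 ^ (#|T| - d) \/
  exists B : {set T}, [/\ #|B| = d, independent e (~: B) &
     forall v w, v \notin B -> w \in B -> e v w].
Proof.
move=> d0 [sym irr] mind.
have [m hm] : exists m, m = 3 * (d + 1) by eexists.
have [c0 hc0] : exists c0, c0 = 2 * m by eexists.
have [K hK] : exists K, K = c0 + d + 1 by eexists.
have [R hR] : exists R, R = c0 + c0 * K by eexists.
have -> : Nbound d = R + K + 3 * d + 3 by rewrite hR hK hc0 hm.
move=> hn.
case: (cover_lemma irr m setT) => [h|[C [hC hCi]]].
  left; rewrite num_indep_iU; rewrite cardsT in h; apply: (case1 hm _ h); lia.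
rewrite setTD in hCi; rewrite -hc0 in hC.
have F1 : forall u y, u \notin C -> e u y -> y \in C.
  move=> u y uC euy; apply/negPn/negP => yC.
  by move/indepP: hCi => /(_ u y); rewrite !inE uC yC euy => /(_ isT isT).
pose B := [set w | K <= degree e w].
have degC : forall u, u \notin C -> degree e u <= #|C|.
  move=> u uC; apply: subset_leq_card; apply/subsetP => y; rewrite inE.
  exact: F1.
have BC : B \subset C.
  apply/subsetP => w; rewrite inE => hw; apply/negPn/negP => wC.
  move: (degC w wC); lia.
pose I0 := [set u | (u \notin C) && ([set y | e u y] \subset B)].
have cI0 : #|~: I0| <= R.
  have sub : ~: I0 \subset C :|: \bigcup_(w in C :\: B) [set y | e w y].
    apply/subsetP => u; rewrite !inE negb_and negbK.
    case uC: (u \in C) => //= /subsetPn [y]; rewrite inE => euy yB.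
    apply/bigcupP; exists y; last by rewrite inE sym.
    by rewrite inE yB (F1 u) ?uC.
  apply: leq_trans (subset_leq_card sub) _.
  apply: leq_trans (leq_card_setU _ _) _.
  apply: leq_trans (leq_add (leqnn _) (card_bigcup_le _ _)) _.
  apply: leq_trans (leq_add (leqnn _) (_ : _ <= \sum_(w in C :\: B) K)) _.
    apply: leq_sum => w; rewrite !inE => /andP[wB _].
    by apply: ltnW; rewrite ltnNge.
  rewrite sum_nat_const.
  have : #|C :\: B| <= #|C| by apply: subset_leq_card; apply: subsetDl.
  move=> hCB; rewrite hR.
  have : #|C :\: B| * K <= c0 * K by rewrite leq_mul2r; apply/orP; right; lia.
  lia.
have [u uI0] : exists u, u \in I0.
  have : I0 != set0.
    apply/eqP => h; move: cI0; rewrite h setC0 cardsT; lia.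
  by case/set0Pn => u hu; exists u.
have dB : d <= #|B|.
  move: uI0; rewrite inE => /andP[_ sub].
  apply: leq_trans (mind u) _; exact: subset_leq_card.
have Bc0 : #|B| < c0 by apply: leq_ltn_trans (subset_leq_card BC) hC.
have hdec := decomp e B.
have cB : #|~: B| = #|T| - #|B| by move: (cardsC B); lia.
have iUB := iU_le_pow e (~: B).
have [ltdB|eqdB] : d < #|B| \/ d = #|B| by clear -dB; lia.
2: {
  have NbI : forall w, w \in B -> #|~: [set y | e w y]| <= R.
    move=> w wB; apply: leq_trans _ cI0; apply: subset_leq_card.
    rewrite setCS; apply/subsetP => v; rewrite !inE => /andP[_ sub].
    have : [set y | e v y] == B.
      rewrite eqEcard sub /= -eqdB; exact: mind.
    by move/eqP => hv; move: wB; rewrite -hv inE sym.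
  have hsum : \sum_(w in B) 2 ^ #|~: [set y | e w y]| <= d * 2 ^ R.
    rewrite eqdB -sum_nat_const; apply: leq_sum => w wB.
    by apply: leq_pexp2l => //; apply: NbI.
  case: (boolP (independent e (~: B))) => hB.
    right; exists B; split => // v w vB wB.
    have : [set y | e v y] == B.
      rewrite eqEcard -eqdB mind andbT; apply/subsetP => y; rewrite inE => evy.
      apply/negPn/negP => yB.
      by move/indepP: hB => /(_ v y); rewrite !in_setC vB yB evy => /(_ isT isT).
    by move/eqP => hv; move: wB; rewrite -hv inE.
  left.
  have [x [y [xB yB exy]]] := not_indep_edge hB.
  have xy : x != y by apply/eqP => hxy; move: (irr x); rewrite {2}hxy exy.
  have cardU : #|~: B| = #|~: B :\ x :\ y| + 2.
    rewrite (cardsD1 x (~: B)) xB (cardsD1 y (~: B :\ x)) !inE eq_sym xy.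
    rewrite !inE in yB; rewrite yB; lia.
  have h3 := iU_edge xB yB exy.
  have h4 := iU_le_pow e (~: B :\ x :\ y).
  have [k hk] : exists k, k = #|T| - d - 2 by eexists.
  have ek : #|~: B :\ x :\ y| = k by clear -cardU cB eqdB hk hn; lia.
  rewrite ek in h4.
  have e1 : 2 ^ (#|T| - d) = 4 * 2 ^ k.
    rewrite (_ : #|T| - d = k + 2) ?expnD 1?mulnC //; clear -hk hn; lia.
  have e2 : 2 ^ k = 2 ^ R * 2 ^ d * 2 ^ (k - R - d).
    by rewrite -!expnD; congr (2 ^ _); clear -hk hn hR hK; lia.
  have dd : d < 2 ^ d by apply: ltn_expl.
  have p3 : 0 < 2 ^ (k - R - d) by rewrite expn_gt0.
  have p4 : 0 < 2 ^ R by rewrite expn_gt0.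
  have : d * 2 ^ R < 2 ^ k.
    rewrite e2; apply: (@leq_trans (2 ^ R * 2 ^ d)).
      by rewrite mulnC ltn_pmul2l.
    by rewrite leq_pmulr.
  move=> hlt; rewrite e1; clear -hdec hsum h3 h4 hlt; lia.
}
left.
have hsum : \sum_(w in B) 2 ^ #|~: [set y | e w y]| <= #|B| * 2 ^ (#|T| - K).
  rewrite -sum_nat_const; apply: leq_sum => w; rewrite inE => hw.
  apply: leq_pexp2l => //.
  move: (cardsC [set y | e w y]); rewrite /degree in hw; clear -hw; lia.
have [k hk] : exists k, k = #|T| - K by eexists.
rewrite -hk in hsum.
have e1 : 2 ^ (#|T| - d) = 2 * 2 ^ c0 * 2 ^ k.
  by rewrite -!expnS -expnD; congr (2 ^ _); clear -hk hn hK; lia.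
have e2 : 2 ^ #|~: B| <= 2 ^ c0 * 2 ^ k.
  by rewrite -expnD; apply: leq_pexp2l => //; clear -cB ltdB hk hK hn; lia.
have hc : c0 < 2 ^ c0 by apply: ltn_expl.
have pk : 0 < 2 ^ k by rewrite expn_gt0.
have : #|B| * 2 ^ k < 2 ^ c0 * 2 ^ k.
  by rewrite ltn_pmul2r //; clear -Bc0 hc; lia.
move=> hlt; rewrite e1 -mulnA; clear -hdec hsum iUB e2 hlt Bc0 hc; lia.
Qed.

Theorem mainTheorem4 (delta : nat) (hdelta : 0 < delta) :
  exists N : nat, forall n : nat, N <= n ->
    simple_graph (Kbip n delta) /\
    min_degree_ge (Kbip n delta) delta /\
    forall e : rel 'I_n, simple_graph e -> min_degree_ge e delta ->
      num_indep e <= num_indep (Kbip n delta) /\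
      (num_indep e = num_indep (Kbip n delta) -> graph_iso e (Kbip n delta)).
Proof.
exists (Nbound delta) => n hn.
have h2 : delta + delta <= n by move: hn; rewrite /Nbound; lia.
have h1 : delta <= n by lia.
split; first exact: Kbip_simple.
split; first exact: Kbip_mindeg.
move=> e se me; rewrite Kbip_count //.
have hn' : Nbound delta <= #|'I_n| by rewrite card_ord.
have pd : 0 < 2 ^ delta by rewrite expn_gt0.
case: (main_struct hdelta se me hn') => [|[B [cB hI hvw]]].
  rewrite card_ord => hlt; split; first lia.
  move=> heq; exfalso; lia.
have cBC : #|~: B| = n - delta by move: (cardsC B); rewrite card_ord cB; lia.
rewrite (struct_count hI hvw) cBC.
case: (boolP (independent e B)) => hB.
  rewrite Mset_eq // cB; split => // _.
  apply: (iso_Kbip h1 cB) => x y.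
  case: se => sym irr.
  case xB: (x \in B); case yB: (y \in B) => /=.
  - by apply/negbTE; move/indepP: hB; apply.
  - by rewrite sym; apply: hvw; rewrite ?yB.
  - by apply: hvw; rewrite ?xB.
  - apply/negbTE; move/indepP: hI; apply; by rewrite inE ?xB ?yB.
have := Mset_lt hB; rewrite cB => hlt; split; first lia.
move=> heq; exfalso; lia.
Qed.
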